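(* In any commitment scheme with non-colluding bidders as described in the context, for every $\ell\in\mathcal{L}$, $(A_\ell,S_\ell)-(M_\ell,X_\ell^n)-(Y^n,S'_\ell)$ forms a Markov chain.
   Context: Setting: $L$ bidders $\mathcal{L}=\{1,\dots,L\}$ and one verifier connected by a discrete memoryless multiple-access channel $p_{Y|X_{\mathcal{L}}}$ with finite alphabets, plus a noiseless channel. Bidder $\ell$ has a random message $A_\ell$ and private local randomness $S_\ell$; the verifier has local randomness $S'_\ell$ for each $\ell$; all messages and local randomness variables are mutually independent. For $i=1,\dots,n$, bidder $\ell$ sends channel input $X_{\ell,i}$ as a function of $(A_\ell,S_\ell)$ and the verifier messages to it received so far; then $r_i$ rounds of noiseless communication follow: in round $j$ bidder $\ell$ sends $M_{\ell,i,j}$ as a function of $(A_\ell,S_\ell)$ and the previous verifier messages $M'_{\ell,1:i,1:j-1}$, and the verifier replies $M'_{\ell,i,j}$ as a function of $(S'_\ell, M_{\ell,1:i,1:j}, Y^i)$ where $Y^i=(Y_1,\dots,Y_i)$ are the channel outputs so far. $M_\ell$ denotes the entire noiseless exchange (both directions) between bidder $\ell$ and the verifier, and $X_\ell^n=(X_{\ell,1},\dots,X_{\ell,n})$. *)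

(* Defs.v *)
From HB Require Import structures.
From mathcomp Require Import all_boot all_order all_algebra.
Set Implicit Arguments. Unset Strict Implicit. Unset Printing Implicit Defensive.
Import Order.TTheory GRing.Theory Num.Theory.
Local Open Scope ring_scope.

Definition prob {R : realFieldType} {Om : finType} (p : Om -> R) (E : pred Om) : R :=
  \sum_(o : Om | E o) p o.

(* U - V - W is a Markov chain under p:  P(u,v,w) P(v) = P(u,v) P(v,w)
   for all values u v w (i.e. U and W are conditionally independent given V). *)
Definition markov_chain {R : realFieldType} {Om : finType} (p : Om -> R)
  {TU TV TW : eqType} (U : Om -> TU) (V : Om -> TV) (W : Om -> TW) : Prop :=
  forall u v w,
    prob p [pred o | (U o == u) && (V o == v) && (W o == w)] * prob p [pred o | V o == v]
    = prob p [pred o | (U o == u) && (V o == v)] * prob p [pred o | (V o == v) && (W o == w)].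

Section Scheme.
(* L bidders indexed by 'I_L, blocklength n, per-bidder finite alphabets. *)
Variables (R : realFieldType) (L n : nat).
Variables (A S S' X MB MV : 'I_L -> finType) (Y : finType).
(* r i = number of noiseless rounds after channel use i (0-based, i < n). *)
Variable r : nat -> nat.
(* enc l i a s mv'   : channel input X_{l,i} from (A_l,S_l) and the verifier
                        messages to l received so far.
   bmsg l i j a s mv' : bidder message M_{l,i,j} from (A_l,S_l) and previous
                        verifier messages M'_{l,1:i,1:j-1}.
   vmsg l i j s' mb ys: verifier reply M'_{l,i,j} from S'_l, M_{l,1:i,1:j}, Y^i. *)
Variable enc : forall l : 'I_L, nat -> A l -> S l -> seq (MV l) -> X l.
Variable bmsg : forall l : 'I_L, nat -> nat -> A l -> S l -> seq (MV l) -> MB l.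
Variable vmsg : forall l : 'I_L, nat -> nat -> S' l -> seq (MB l) -> seq Y -> MV l.

(* noiseless rounds after channel use i; the state is (bidder msgs, verifier msgs)
   exchanged so far between bidder l and the verifier, ys = outputs Y^n. *)
Definition rounds (l : 'I_L) (a : A l) (s : S l) (s' : S' l) (ys : seq Y) (i : nat)
  (st : seq (MB l) * seq (MV l)) : seq (MB l) * seq (MV l) :=
  foldl (fun (st : seq (MB l) * seq (MV l)) (j : nat) =>
           let mb := rcons st.1 (@bmsg l i j a s st.2) in
           (mb, rcons st.2 (@vmsg l i j s' mb (take i.+1 ys))))
        st (iota 0 (r i)).

Fixpoint transcript (l : 'I_L) (a : A l) (s : S l) (s' : S' l) (ys : seq Y) (k : nat)
  : seq (MB l) * seq (MV l) :=
  match k with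
  | 0 => ([::], [::])
  | k'.+1 => rounds a s s' ys k' (transcript a s s' ys k')
  end.

Definition outcome : finType :=
  ({dffun forall l, A l} * {dffun forall l, S l} * {dffun forall l, S' l} * n.-tuple Y)%type.

Definition out_A (o : outcome) := o.1.1.1.
Definition out_S (o : outcome) := o.1.1.2.
Definition out_S' (o : outcome) := o.1.2.
Definition out_Y (o : outcome) : n.-tuple Y := o.2.

(* M_l : the whole noiseless exchange between bidder l and the verifier *)
Definition M_rv (l : 'I_L) (o : outcome) : seq (MB l) * seq (MV l) :=
  transcript (out_A o l) (out_S o l) (out_S' o l) (out_Y o) n.

Definition X_at (l : 'I_L) (o : outcome) (i : nat) : X l :=
  @enc l i (out_A o l) (out_S o l)
      (transcript (out_A o l) (out_S o l) (out_S' o l) (out_Y o) i).2.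

Definition Xn_rv (l : 'I_L) (o : outcome) : n.-tuple (X l) :=
  [tuple X_at l o i | i < n].

Definition Xall_at (o : outcome) (i : nat) : {dffun forall l, X l} :=
  finfun (fun l => X_at l o i).

Variables (PA : forall l, A l -> R) (PS : forall l, S l -> R) (PS' : forall l, S' l -> R).
Variable W : {dffun forall l, X l} -> Y -> R.

Definition joint (o : outcome) : R :=
  (\prod_(l < L) @PA l (out_A o l)) * (\prod_(l < L) @PS l (out_S o l))
  * (\prod_(l < L) @PS' l (out_S' o l))
  * \prod_(i < n) W (Xall_at o i) (tnth (out_Y o) i).

Definition is_pmf (T : finType) (p : T -> R) : Prop :=
  (forall t, 0 <= p t) /\ \sum_(t : T) p t = 1.

End Scheme.

(* Main.v *)
Require Import Defs.
From HB Require Import structures.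
From mathcomp Require Import all_boot all_order all_algebra ring.
Import Order.TTheory GRing.Theory Num.Theory.
Set Implicit Arguments. Unset Strict Implicit.

Definition stepf {J MB MV : Type} (b : J -> seq MV -> MB) (v : J -> seq MB -> MV)
  (st : seq MB * seq MV) (j : J) : seq MB * seq MV :=
  (rcons st.1 (b j st.2), rcons st.2 (v j (rcons st.1 (b j st.2)))).

Definition run {J MB MV : Type} (b : J -> seq MV -> MB) (v : J -> seq MB -> MV)
  (js : seq J) (st : seq MB * seq MV) := foldl (stepf b v) st js.

Lemma run_shape {J MB MV : Type} (b : J -> seq MV -> MB) (v : J -> seq MB -> MV) js st :
  exists e1 e2, run b v js st = (st.1 ++ e1, st.2 ++ e2) /\ size e1 = size js /\ size e2 = size js.
Proof.
elim: js st => [|j js IH] st /=.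
  by exists [::], [::]; rewrite !cats0; case: st.
have [e1 [e2 [-> [h1 h2]]]] := IH (stepf b v st j).
exists (b j st.2 :: e1), (v j (rcons st.1 (b j st.2)) :: e2).
by rewrite /= -!cat_rcons h1 h2.
Qed.

Lemma run_cat {J MB MV : Type} (b : J -> seq MV -> MB) (v : J -> seq MB -> MV) js1 js2 st :
  run b v (js1 ++ js2) st = run b v js2 (run b v js1 st).
Proof. by rewrite /run foldl_cat. Qed.

Lemma run_prefix {J MB MV : Type} (b1 b2 : J -> seq MV -> MB) (v1 v2 : J -> seq MB -> MV) js1 js2 st :
  run b1 v1 (js1 ++ js2) st = run b2 v2 (js1 ++ js2) st ->
  run b1 v1 js1 st = run b2 v2 js1 st.
Proof.
rewrite !run_cat.
have [e1 [e2 [E1 [h1 h2]]]] := run_shape b1 v1 js1 st.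
have [f1 [f2 [F1 [k1 k2]]]] := run_shape b2 v2 js1 st.
have [g1 [g2 [G1 _]]] := run_shape b1 v1 js2 (run b1 v1 js1 st).
have [i1 [i2 [I1 _]]] := run_shape b2 v2 js2 (run b2 v2 js1 st).
rewrite G1 I1 E1 F1 /= => [[H1 H2]].
have := congr1 (take (size st.1 + size js1)) H1.
have := congr1 (take (size st.2 + size js1)) H2.
rewrite !take_size_cat ?size_cat ?h1 ?h2 ?k1 ?k2 //.
move=> A1 A2. by rewrite A1 A2.
Qed.

Lemma run_rect {J MB MV : Type} (b1 b2 : J -> seq MV -> MB) (v1 v2 : J -> seq MB -> MV) js st :
  run b1 v1 js st = run b2 v2 js st ->
  run b1 v2 js st = run b1 v1 js st.
Proof.
elim: js st => [|j js IH] st // H.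
have H' := H; rewrite -[j :: js]/([:: j] ++ js) in H'.
have /= E := run_prefix H'.
have E2 : stepf b1 v2 st j = stepf b1 v1 st j.
  move: E; rewrite /stepf => [[e1 e2]].
  by rewrite e2 e1.
rewrite E2; apply: IH.
by move: H; rewrite /= E.
Qed.

Fixpoint pairs (r : nat -> nat) (k : nat) : seq (nat * nat) :=
  if k is k'.+1 then pairs r k' ++ [seq (k', j) | j <- iota 0 (r k')] else [::].

Lemma transcript_run (L : nat) (A S S' MB MV : 'I_L -> finType) (Y : finType) (r : nat -> nat)
  (bmsg : forall l : 'I_L, nat -> nat -> A l -> S l -> seq (MV l) -> MB l)
  (vmsg : forall l : 'I_L, nat -> nat -> S' l -> seq (MB l) -> seq Y -> MV l)
  (l : 'I_L) a s s' ys k :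
  transcript r bmsg vmsg a s s' ys k =
  run (fun ij ms => bmsg l ij.1 ij.2 a s ms)
      (fun ij mb => vmsg l ij.1 ij.2 s' mb (take ij.1.+1 ys)) (pairs r k) ([::], [::]).
Proof.
elim: k => [|k IH] //=.
rewrite run_cat -IH /rounds.
elim: (iota 0 (r k)) (transcript r bmsg vmsg a s s' ys k) => [|j js IHj] st //=.

Qed.

Lemma pairs_prefix r k n : k <= n -> exists rest, pairs r n = pairs r k ++ rest.
Proof.
elim: n => [|n IH].
  by rewrite leqn0 => /eqP ->; exists [::].
rewrite leq_eqVlt => /orP [/eqP ->|]; first by exists [::]; rewrite cats0.
rewrite ltnS => /IH [rest E].
by exists (rest ++ [seq (n, j) | j <- iota 0 (r n)]); rewrite /= E catA.
Qed.

Lemma transcript_rect (L : nat) (A S S' MB MV : 'I_L -> finType) (Y : finType) (r : nat -> nat)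
  (bmsg : forall l : 'I_L, nat -> nat -> A l -> S l -> seq (MV l) -> MB l)
  (vmsg : forall l : 'I_L, nat -> nat -> S' l -> seq (MB l) -> seq Y -> MV l)
  (l : 'I_L) a1 s1 s1' ys1 a2 s2 s2' ys2 n k :
  transcript r bmsg vmsg (l:=l) a1 s1 s1' ys1 n = transcript r bmsg vmsg a2 s2 s2' ys2 n ->
  k <= n ->
  transcript r bmsg vmsg a1 s1 s2' ys2 k = transcript r bmsg vmsg a1 s1 s1' ys1 k.
Proof.
rewrite !transcript_run => H /(pairs_prefix r) [rest E].
rewrite E in H.
exact: run_rect (run_prefix H).
Qed.

Lemma markov_swap (R : realFieldType) (Om : finType) (p : Om -> R)
  (TU TV TW : eqType) (U : Om -> TU) (V : Om -> TV) (W : Om -> TW) (mix : Om -> Om -> Om) :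
  (forall x z, mix (mix x z) (mix z x) = x) ->
  (forall x z, U (mix x z) = U x) -> (forall x z, W (mix x z) = W z) ->
  (forall x z, V x = V z -> V (mix x z) = V x) ->
  (forall x z, V x = V z -> (p (mix x z) * p (mix z x) = p x * p z)%R) ->
  markov_chain p U V W.
Proof.
move=> hinv hU hW hV hp u v w; rewrite /prob.
rewrite big_distrl /=.
under eq_bigr do rewrite big_distrr /=.
rewrite pair_big_dep /=.
rewrite big_distrl /=.
under [RHS]eq_bigr do rewrite big_distrr /=.
rewrite pair_big_dep /=.
pose sig := fun xz : Om * Om => (mix xz.1 xz.2, mix xz.2 xz.1).
have sinv : involutive sig by case=> x z; rewrite /sig /= !hinv.
rewrite [RHS](reindex_inj (inv_inj sinv)) /=.
apply: eq_big => [[x z]|[x z]] /=.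
  apply/idP/idP.
    move=> /andP [/andP [/andP [/eqP Ux /eqP Vx] /eqP Wx] /eqP Vz].
    have Vxz : V x = V z by rewrite Vx Vz.
    rewrite hU hW Ux eqxx /= hV // Vx eqxx /= hV -?Vxz // Vx eqxx /=.
    by rewrite Wx eqxx.
  rewrite hU hW => /andP [/andP [/eqP Ux /eqP Vm1] /andP [/eqP Vm2 /eqP Wx]].
  have Vm : V (mix x z) = V (mix z x) by rewrite Vm1 Vm2.
  have Vx := hV _ _ Vm; rewrite hinv in Vx.
  have Vz := hV _ _ (esym Vm); rewrite hinv in Vz.
  by rewrite Ux Wx Vx Vz Vm1 Vm2 !eqxx.
move=> /andP [/andP [/andP [_ /eqP Vx] _] /eqP Vz].
by rewrite /sig /= hp // Vx Vz.
Qed.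

Definition mixo (L n : nat) (A S S' : 'I_L -> finType) (Y : finType) (l : 'I_L)
  (x z : outcome n A S S' Y) : outcome n A S S' Y :=
  ((finfun (fun k => if k == l then out_A x k else out_A z k) : {dffun forall k, A k}),
   (finfun (fun k => if k == l then out_S x k else out_S z k) : {dffun forall k, S k}),
   out_S' z, out_Y z).

Lemma mixo_A L n A S S' Y l x z k :
  out_A (@mixo L n A S S' Y l x z) k = if k == l then out_A x k else out_A z k.
Proof. by rewrite /mixo /out_A /= ffunE. Qed.
Lemma mixo_S L n A S S' Y l x z k :
  out_S (@mixo L n A S S' Y l x z) k = if k == l then out_S x k else out_S z k.
Proof. by rewrite /mixo /out_S /= ffunE. Qed.
Lemma mixo_S' L n A S S' Y l x z :
  out_S' (@mixo L n A S S' Y l x z) = out_S' z.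
Proof. by []. Qed.
Lemma mixo_Y L n A S S' Y l x z :
  out_Y (@mixo L n A S S' Y l x z) = out_Y z.
Proof. by []. Qed.

Lemma mixo_inv L n A S S' Y l x z :
  @mixo L n A S S' Y l (mixo l x z) (mixo l z x) = x.
Proof.
case: x => [[[a1 s1] s1'] y1]; case: z => [[[a2 s2] s2'] y2].
rewrite /mixo /=; congr (_, _, _, _); apply/ffunP => k; rewrite /out_A /out_S /= !ffunE;
  by case: eqP => // ->.
Qed.

Lemma prod_mix (R : realFieldType) L (A : 'I_L -> finType) (f : forall k, A k -> R) (l : 'I_L)
  (g1 g2 : {dffun forall k, A k}) :
  ((\prod_(k < L) f k ((finfun (fun k => if k == l then g1 k else g2 k) : {dffun forall k, A k}) k))
  * (\prod_(k < L) f k ((finfun (fun k => if k == l then g2 k else g1 k) : {dffun forall k, A k}) k))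
  = (\prod_(k < L) f k (g1 k)) * (\prod_(k < L) f k (g2 k)))%R.
Proof.
rewrite -!big_split /=; apply: eq_bigr => k _; rewrite !ffunE.
by case: eqP => // _; rewrite GRing.mulrC.
Qed.

Lemma prod_mix' (R : realFieldType) L (A : 'I_L -> finType) (f : forall k, A k -> R) (l : 'I_L)
  (g1 g2 h1 h2 : forall k, A k) :
  (forall k, h1 k = if k == l then g1 k else g2 k) ->
  (forall k, h2 k = if k == l then g2 k else g1 k) ->
  ((\prod_(k < L) f k (h1 k)) * (\prod_(k < L) f k (h2 k))
  = (\prod_(k < L) f k (g1 k)) * (\prod_(k < L) f k (g2 k)))%R.
Proof.
move=> H1 H2; rewrite -!big_split /=; apply: eq_bigr => k _; rewrite H1 H2.
by case: eqP => // _; rewrite GRing.mulrC.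
Qed.

Lemma mul4 (R : realFieldType) (a1 a2 b1 b2 c1 c2 d1 d2 : R) :
  (a1 * b1 * c1 * d1 * (a2 * b2 * c2 * d2) = (a1 * a2) * (b1 * b2) * (c1 * c2) * (d1 * d2))%R.
Proof. ring. Qed.

Theorem lemma5 (R : realFieldType) (L n : nat)
  (A S S' X MB MV : 'I_L -> finType) (Y : finType) (r : nat -> nat)
  (enc : forall l : 'I_L, nat -> A l -> S l -> seq (MV l) -> X l)
  (bmsg : forall l : 'I_L, nat -> nat -> A l -> S l -> seq (MV l) -> MB l)
  (vmsg : forall l : 'I_L, nat -> nat -> S' l -> seq (MB l) -> seq Y -> MV l)
  (PA : forall l, A l -> R) (PS : forall l, S l -> R) (PS' : forall l, S' l -> R)
  (W : {dffun forall l, X l} -> Y -> R)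
  (hPA : forall l, is_pmf (PA l)) (hPS : forall l, is_pmf (PS l))
  (hPS' : forall l, is_pmf (PS' l)) (hW : forall x, is_pmf (W x))
  (l : 'I_L) :
  markov_chain (joint r enc bmsg vmsg PA PS PS' W)
    (fun o : outcome n A S S' Y => (out_A o l, out_S o l))
    (fun o : outcome n A S S' Y => (M_rv r bmsg vmsg l o, Xn_rv r enc bmsg vmsg l o))
    (fun o : outcome n A S S' Y => (out_Y o, out_S' o l)).
Proof.
have key : forall x z : outcome n A S S' Y,
    M_rv r bmsg vmsg l x = M_rv r bmsg vmsg l z ->
    forall k, k <= n ->
    transcript r bmsg vmsg (out_A (mixo l x z) l) (out_S (mixo l x z) l)
      (out_S' (mixo l x z) l) (out_Y (mixo l x z)) k =
    transcript r bmsg vmsg (out_A x l) (out_S x l) (out_S' x l) (out_Y x) k.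
  move=> x z HM k hk; rewrite mixo_A mixo_S mixo_S' mixo_Y eqxx.
  exact: transcript_rect HM hk.
have keyX : forall x z : outcome n A S S' Y,
    M_rv r bmsg vmsg l x = M_rv r bmsg vmsg l z -> forall i, i < n ->
    X_at r enc bmsg vmsg l (mixo l x z) i = X_at r enc bmsg vmsg l x i.
  move=> x z HM i hi; rewrite /X_at key ?(ltnW hi) //.
  by rewrite mixo_A mixo_S eqxx.
apply: (markov_swap (mix := mixo l)).
- exact: mixo_inv.
- by move=> x z; rewrite mixo_A mixo_S eqxx.
- by move=> x z; rewrite mixo_Y mixo_S'.
- move=> x z [HM HX]; congr (_, _).
    exact: key HM n (leqnn n).
  by apply: eq_mktuple => i; rewrite keyX.
move=> x z HV; have HM := congr1 fst HV; have HX := congr1 snd HV; simpl in HM, HX.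
have XA : forall x z : outcome n A S S' Y,
    M_rv r bmsg vmsg l x = M_rv r bmsg vmsg l z ->
    Xn_rv r enc bmsg vmsg l x = Xn_rv r enc bmsg vmsg l z ->
    forall i : 'I_n, Xall_at r enc bmsg vmsg (mixo l x z) i = Xall_at r enc bmsg vmsg z i.
  move=> x0 z0 HM0 HX0 i; apply/ffunP => k; rewrite !ffunE.
  have [->|hk] := eqVneq k l.
    rewrite keyX //.
    have := congr1 (fun t => tnth t i) HX0.
    by rewrite /Xn_rv !tnth_mktuple.
  by rewrite /X_at mixo_A mixo_S ?mixo_S' ?mixo_Y (negbTE hk).
have C1 : (\prod_(i < n) W (Xall_at r enc bmsg vmsg (mixo l x z) i) (tnth (out_Y (mixo l x z)) i)
   = \prod_(i < n) W (Xall_at r enc bmsg vmsg z i) (tnth (out_Y z) i))%R.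
  by apply: eq_bigr => i _; rewrite (XA x z HM HX).
have C2 : (\prod_(i < n) W (Xall_at r enc bmsg vmsg (mixo l z x) i) (tnth (out_Y (mixo l z x)) i)
   = \prod_(i < n) W (Xall_at r enc bmsg vmsg x i) (tnth (out_Y x) i))%R.
  by apply: eq_bigr => i _; rewrite (XA z x (esym HM) (esym HX)).
rewrite /joint C1 C2 !mixo_S' !mul4.
rewrite (prod_mix' PA (mixo_A l x z) (mixo_A l z x)).
rewrite (prod_mix' PS (mixo_S l x z) (mixo_S l z x)).
by rewrite [X in (_ * X * _)%R]GRing.mulrC [X in (_ * X)%R]GRing.mulrC.
Qed.
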